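(* Assume $n_1,n_2\in(0,4)$ and (IE). Then for all $\varepsilon\in(0,1)$ and any $t\in(0,T_{max,\varepsilon})$, $$\frac12\frac{d}{dt}\int_\Omega u_{\varepsilon x}^2+\varepsilon\int_\Omega\frac{u_\varepsilon^4}{u_\varepsilon^{4-n_1}+\varepsilon}u_{\varepsilon xxx}^2+\frac{D_1}{2}\int_\Omega u_{\varepsilon xx}^2\le\chi_1\int_\Omega\Big(\frac{u_\varepsilon^{5-n_1}}{u_\varepsilon^{4-n_1}+\varepsilon}v_{\varepsilon x}\Big)_xu_{\varepsilon xx}+3\lambda_1\int_\Omega u_{\varepsilon x}^2+\frac{a_1^2}{2D_1}\int_\Omega u_\varepsilon^2v_\varepsilon^2$$ and $$\frac12\frac{d}{dt}\int_\Omega v_{\varepsilon x}^2+\varepsilon\int_\Omega\frac{v_\varepsilon^4}{v_\varepsilon^{4-n_2}+\varepsilon}v_{\varepsilon xxx}^2+\frac{D_2}{2}\int_\Omega v_{\varepsilon xx}^2\le-\chi_2\int_\Omega\Big(\frac{v_\varepsilon^{5-n_2}}{v_\varepsilon^{4-n_2}+\varepsilon}u_{\varepsilon x}\Big)_xv_{\varepsilon xx}+3\lambda_2\int_\Omega v_{\varepsilon x}^2+\frac{a_2^2}{2D_2}\int_\Omega u_\varepsilon^2v_\varepsilon^2.$$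
   Context: Let $\Omega\subset\mathbb{R}$ be a bounded open interval, $D_i,a_i,\lambda_i,\chi_i>0$ ($i=1,2$), and fix $\alpha\in(0,\frac12]$. Assumption (IE): $u_0,v_0\in W^{1,2}(\Omega)$ with $u_0>0,v_0>0$ in $\overline\Omega$; for each $\varepsilon\in(0,1)$, $u_{0\varepsilon},v_{0\varepsilon}\in C^5(\overline\Omega)$ with $u_{0\varepsilon x}=u_{0\varepsilon xxx}=v_{0\varepsilon x}=v_{0\varepsilon xxx}=0$ on $\partial\Omega$; $\frac12\inf_\Omega u_0\le u_{0\varepsilon}\le u_0+1$, $\frac12\inf_\Omega v_0\le v_{0\varepsilon}\le v_0+1$ in $\Omega$; $\int_\Omega u_{0\varepsilon x}^2\le\int_\Omega u_{0x}^2+1$, $\int_\Omega v_{0\varepsilon x}^2\le\int_\Omega v_{0x}^2+1$; $u_{0\varepsilon}\to u_0$, $v_{0\varepsilon}\to v_0$ a.e. as $\varepsilon\searrow0$. Approximating problem: $u_t=-\varepsilon\big(\frac{u^4}{u^{4-n_1}+\varepsilon}u_{xxx}\big)_x+\varepsilon^{\alpha/2}(u^{-\alpha}u_x)_x+D_1u_{xx}-\chi_1\big(\frac{u^{5-n_1}}{u^{4-n_1}+\varepsilon}v_x\big)_x+\frac{3u^3}{3u^2+\varepsilon}(\lambda_1-u+a_1v)$, $v_t=-\varepsilon\big(\frac{v^4}{v^{4-n_2}+\varepsilon}v_{xxx}\big)_x+\varepsilon^{\alpha/2}(v^{-\alpha}v_x)_x+D_2v_{xx}+\chi_2\big(\frac{v^{5-n_2}}{v^{4-n_2}+\varepsilon}u_x\big)_x+\frac{3v^3}{3v^2+\varepsilon}(\lambda_2-v-a_2u)$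 in $\Omega\times(0,\infty)$, $u_x=v_x=u_{xxx}=v_{xxx}=0$ on $\partial\Omega$, $u(\cdot,0)=u_{0\varepsilon}$, $v(\cdot,0)=v_{0\varepsilon}$. For $n_i\in(0,4)$ and each $\varepsilon$ it has a classical solution $(u_\varepsilon,v_\varepsilon)$, positive in $\overline\Omega\times[0,T_{max,\varepsilon})$, belonging to $\bigcap_{s\in(3/2,2)}C^0([0,T_{max,\varepsilon});W^{s,2}(\Omega))\cap C^{4,1}(\overline\Omega\times(0,T_{max,\varepsilon}))$, where $T_{max,\varepsilon}\in(0,\infty]$ is maximal: either $T_{max,\varepsilon}=\infty$ or $\limsup_{t\nearrow T_{max,\varepsilon}}\{\|u_\varepsilon(\cdot,t)\|_{W^{2,2}}+\|1/u_\varepsilon(\cdot,t)\|_{L^\infty}+\|v_\varepsilon(\cdot,t)\|_{W^{2,2}}+\|1/v_\varepsilon(\cdot,t)\|_{L^\infty}\}=\infty$. *)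

(* Defs.v *)
From Stdlib Require Import Reals.
From Coquelicot Require Import Coquelicot.
Open Scope R_scope.

Definition in_cyl (a b : R) (T : Rbar) (x t : R) : Prop :=
  a <= x <= b /\ 0 < t /\ Rbar_lt t T.
Definition in_open_cyl (a b : R) (T : Rbar) (x t : R) : Prop :=
  a < x < b /\ 0 < t /\ Rbar_lt t T.

Definition cont_cyl (a b : R) (T : Rbar) (f : R -> R -> R) : Prop :=
  forall x t, in_cyl a b T x t ->
  forall e, 0 < e -> exists d, 0 < d /\
    forall y s, in_cyl a b T y s -> Rabs (y - x) < d -> Rabs (s - t) < d ->
      Rabs (f y s - f x t) < e.

(* u belongs to C^{4,1}( [a,b] x (0,T) ) with the partial derivatives
   u1 = u_x, u2 = u_xx, u3 = u_xxx, u4 = u_xxxx, ut = u_t : the derivatives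
   exist classically in the interior and u, u1, ..., u4, ut are jointly
   continuous up to the spatial boundary (u1..u4, ut at x = a, b are the
   continuous extensions). *)
Definition C41 (a b : R) (T : Rbar) (u u1 u2 u3 u4 ut : R -> R -> R) : Prop :=
  (forall x t, in_open_cyl a b T x t ->
     is_derive (fun y => u y t) x (u1 x t) /\
     is_derive (fun y => u1 y t) x (u2 x t) /\
     is_derive (fun y => u2 y t) x (u3 x t) /\
     is_derive (fun y => u3 y t) x (u4 x t) /\
     is_derive (fun s => u x s) t (ut x t)) /\
  cont_cyl a b T u /\ cont_cyl a b T u1 /\ cont_cyl a b T u2 /\
  cont_cyl a b T u3 /\ cont_cyl a b T u4 /\ cont_cyl a b T ut.

Definition mob (eps n w : R) : R := w ^ 4 / (Rpower w (4 - n) + eps).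
Definition tax (eps n w : R) : R := Rpower w (5 - n) / (Rpower w (4 - n) + eps).

(* Main.v *)
Require Import Defs.
From Stdlib Require Import Reals.
From Coquelicot Require Import Coquelicot.
From Stdlib Require Import Lra Psatz Classical ClassicalEpsilon.
Open Scope R_scope.

Definition clamp (a b x : R) : R := Rmax a (Rmin b x).
Definition relc (a b : R) (g : R -> R) : Prop :=
  forall x, continuous (fun y => g (clamp a b y)) x.

Lemma clamp_in a b x : a <= b -> a <= clamp a b x <= b.
Proof. intros; unfold clamp, Rmax, Rmin; repeat destruct Rle_dec; lra. Qed.
Lemma clamp_id a b x : a <= x <= b -> clamp a b x = x.
Proof. intros; unfold clamp, Rmax, Rmin; repeat destruct Rle_dec; lra. Qed.
Lemma clamp_lip a b x y : a <= b -> Rabs (clamp a b y - clamp a b x) <= Rabs (y - x).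
Proof. intros; unfold clamp, Rmax, Rmin; repeat destruct Rle_dec;
  unfold Rabs; repeat destruct Rcase_abs; lra. Qed.

Lemma cont_ed (f : R -> R) x :
  (forall e, 0 < e -> exists d, 0 < d /\ forall y, Rabs (y - x) < d -> Rabs (f y - f x) < e) ->
  continuous f x.
Proof.
  intros H. apply continuity_pt_filterlim.
  intros e He. destruct (H e He) as [d [Hd H']]. exists d; split; auto.
  intros y [_ Hy]. apply H'. exact Hy.
Qed.

Lemma ed_cont (f : R -> R) x : continuous f x ->
  forall e, 0 < e -> exists d, 0 < d /\ forall y, Rabs (y - x) < d -> Rabs (f y - f x) < e.
Proof.
  intros H e He. apply continuity_pt_filterlim in H.
  destruct (H e He) as [d [Hd H']]. exists d; split; auto.
  intros y Hy. destruct (Req_dec y x) as [->|Hne].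
  - unfold Rminus; rewrite Rplus_opp_r, Rabs_R0; auto.
  - apply H'. split; [split; [exact I| auto]| exact Hy].
Qed.

Lemma cyl_relc a b T f t : a < b -> 0 < t -> Rbar_lt t T -> cont_cyl a b T f ->
  relc a b (fun x => f x t).
Proof.
  intros Hab Ht HT Hc x. apply cont_ed. intros e He.
  assert (Hcx := clamp_in a b x (Rlt_le _ _ Hab)).
  destruct (Hc (clamp a b x) t (conj Hcx (conj Ht HT)) e He) as [d [Hd H]].
  exists d; split; auto. intros y Hy.
  assert (Hcy := clamp_in a b y (Rlt_le _ _ Hab)).
  apply H. split; auto. eapply Rle_lt_trans. apply clamp_lip; lra. auto.
  unfold Rminus; rewrite Rplus_opp_r, Rabs_R0; auto.
Qed.

Lemma relc_ext a b f g : a <= b -> (forall x, a <= x <= b -> f x = g x) -> relc a b f -> relc a b g.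
Proof.
  intros Hab E H x. eapply continuous_ext. 2: apply (H x).
  intros y; simpl. apply E, clamp_in; auto.
Qed.

Lemma relc_const a b c : relc a b (fun _ => c).
Proof. intros x. apply continuous_const. Qed.

Lemma relc_plus a b f g : relc a b f -> relc a b g -> relc a b (fun x => f x + g x).
Proof. intros Hf Hg x. apply (continuous_plus (fun y => f (clamp a b y)) (fun y => g (clamp a b y))); auto. Qed.

Lemma relc_mult a b f g : relc a b f -> relc a b g -> relc a b (fun x => f x * g x).
Proof. intros Hf Hg x. apply (continuous_mult (fun y => f (clamp a b y)) (fun y => g (clamp a b y))); auto. Qed.

Lemma relc_opp a b f : relc a b f -> relc a b (fun x => - f x).
Proof. intros Hf x. apply (continuous_opp (fun y => f (clamp a b y))); auto. Qed.

Lemma relc_minus a b f g : relc a b f -> relc a b g -> relc a b (fun x => f x - g x).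
Proof. intros. apply relc_plus; auto. apply relc_opp; auto. Qed.

Lemma relc_comp a b (phi : R -> R) f : a <= b -> relc a b f ->
  (forall x, a <= x <= b -> continuous phi (f x)) -> relc a b (fun x => phi (f x)).
Proof.
  intros Hab Hf Hp x. apply (continuous_comp (fun y => f (clamp a b y)) phi); auto.
  apply Hp, clamp_in; auto.
Qed.

Lemma relc_pow a b f n : relc a b f -> relc a b (fun x => f x ^ n).
Proof.
  intros Hf. induction n; simpl.
  - apply relc_const.
  - apply relc_mult; auto.
Qed.

Lemma relc_ex_RInt a b f : a <= b -> relc a b f -> ex_RInt f a b.
Proof.
  intros Hab Hf. apply ex_RInt_ext with (fun y => f (clamp a b y)).
  - intros x Hx. rewrite Rmin_left, Rmax_right in Hx by auto. rewrite clamp_id; auto; lra.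
  - apply (@ex_RInt_continuous R_CompleteNormedModule). intros; apply Hf.
Qed.

Lemma relc_bound a b f : a <= b -> relc a b f -> exists M, forall x, a <= x <= b -> Rabs (f x) <= M.
Proof.
  intros Hab Hf.
  destruct (continuity_ab_maj (fun x => Rabs (f (clamp a b x))) a b Hab) as [m [Hm _]].
  - intros c _. apply continuity_pt_filterlim.
    apply (continuous_comp (fun y => f (clamp a b y)) Rabs); auto.
    apply continuous_Rabs.
  - exists (Rabs (f (clamp a b m))). intros x Hx. specialize (Hm x Hx). simpl in Hm.
    rewrite clamp_id in Hm; auto.
Qed.


Lemma D_eq (f : R -> R) x l l' : is_derive f x l -> l = l' -> is_derive f x l'.
Proof. intros H ->; auto. Qed.
Lemma D_mult (f g : R -> R) x df dg : is_derive f x df -> is_derive g x dg ->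
  is_derive (fun y => f y * g y) x (df * g x + f x * dg).
Proof. intros. apply (is_derive_mult f g x df dg); auto. intros; apply Rmult_comm. Qed.
Lemma D_plus (f g : R -> R) x df dg : is_derive f x df -> is_derive g x dg ->
  is_derive (fun y => f y + g y) x (df + dg).
Proof. intros. apply (is_derive_plus f g x df dg); auto. Qed.
Lemma D_minus (f g : R -> R) x df dg : is_derive f x df -> is_derive g x dg ->
  is_derive (fun y => f y - g y) x (df - dg).
Proof. intros. apply (is_derive_minus f g x df dg); auto. Qed.
Lemma D_comp (phi g : R -> R) x dphi dg : is_derive phi (g x) dphi -> is_derive g x dg ->
  is_derive (fun y => phi (g y)) x (dphi * dg).
Proof. intros. eapply D_eq. apply (is_derive_comp phi g x dphi dg); auto.
  simpl. unfold scal; simpl; unfold mult; simpl. ring. Qed.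
Lemma D_const (c x : R) : is_derive (fun _ => c) x 0.
Proof. apply (is_derive_const c x). Qed.

Lemma ftc a b h f : a < b -> relc a b h -> relc a b f ->
  (forall x, a < x < b -> is_derive h x (f x)) -> is_RInt f a b (h b - h a).
Proof.
  intros Hab Hh Hf Hd.
  set (fc := fun y => f (clamp a b y)).
  assert (Ex : forall y z, ex_RInt fc y z).
  { intros y z. apply (@ex_RInt_continuous R_CompleteNormedModule). intros; apply Hf. }
  set (F := fun y => RInt fc a y).
  assert (DF : forall x, is_derive F x (fc x)).
  { intros x. apply is_derive_RInt with (a := a).
    apply filter_forall. intros y. apply (RInt_correct fc a y (Ex a y)). apply Hf. }
  set (G := fun y => F y - h (clamp a b y)).
  destruct (MVT_gen G a b (fun _ => 0)) as [c [_ Hc]].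
  - rewrite Rmin_left, Rmax_right by lra. intros x Hx.
    eapply D_eq. apply D_minus. apply DF.
    apply is_derive_ext_loc with (f := h).
    { apply locally_interval with a b; simpl; try tauto.
      intros y Hy1 Hy2. rewrite clamp_id; auto; lra. }
    apply Hd; auto. unfold fc. rewrite clamp_id by lra. simpl. ring.
  - intros x _. apply continuity_pt_filterlim.
    apply (continuous_minus F (fun y => h (clamp a b y))).
    apply ex_derive_continuous. eexists; apply DF. apply Hh.
  - unfold G in Hc. rewrite !clamp_id in Hc by lra.
    unfold F in Hc. rewrite RInt_point in Hc. simpl in Hc.
    assert (E : RInt fc a b = h b - h a).
    { change zero with 0 in Hc. lra. }
    apply is_RInt_ext with fc.
    + intros x Hx. rewrite Rmin_left, Rmax_right in Hx by lra. unfold fc. rewrite clamp_id; auto; lra.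
    + rewrite <- E. apply (@RInt_correct R_CompleteNormedModule), Ex.
Qed.

Lemma ftc0 a b h f : a < b -> relc a b h -> relc a b f ->
  (forall x, a < x < b -> is_derive h x (f x)) -> h a = 0 -> h b = 0 -> RInt f a b = 0.
Proof.
  intros. apply is_RInt_unique. replace 0 with (h b - h a) by lra. apply ftc; auto.
Qed.

Lemma RI_add a b (f g : R -> R) : ex_RInt f a b -> ex_RInt g a b ->
  RInt (fun x => f x + g x) a b = RInt f a b + RInt g a b.
Proof. intros. apply (RInt_plus (V := R_CompleteNormedModule) f g a b); auto. Qed.
Lemma RI_sub a b (f g : R -> R) : ex_RInt f a b -> ex_RInt g a b ->
  RInt (fun x => f x - g x) a b = RInt f a b - RInt g a b.
Proof. intros. apply (RInt_minus (V := R_CompleteNormedModule) f g a b); auto. Qed.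
Lemma RI_mulc a b c (f : R -> R) : ex_RInt f a b ->
  RInt (fun x => c * f x) a b = c * RInt f a b.
Proof. intros H. apply (RInt_scal (V := R_CompleteNormedModule) f a b c H). Qed.
Lemma RI_const a b c : RInt (fun _ => c) a b = c * (b - a).
Proof. rewrite (RInt_const (V := R_CompleteNormedModule)). simpl. unfold scal; simpl; unfold mult; simpl. ring. Qed.

Ltac rring := cbv beta; match goal with |- @eq _ ?x ?y => change (@eq R x y) end; ring.
Ltac rfield := cbv beta; match goal with |- @eq _ ?x ?y => change (@eq R x y) end; field.

Lemma exd_cont (f : R -> R) x : ex_derive f x -> continuous f x.
Proof. apply (ex_derive_continuous (K := R_AbsRing) (V := R_NormedModule)). Qed.


Lemma uc_t a b T f t : a < b -> 0 < t -> Rbar_lt t T -> cont_cyl a b T f ->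
  forall e, 0 < e -> exists d, 0 < d /\ forall x s, a <= x <= b -> 0 < s -> Rbar_lt s T ->
    Rabs (s - t) < d -> Rabs (f x s - f x t) < e.
Proof.
  intros Hab Ht HT Hc e He.
  assert (He2 : 0 < e / 2) by lra.
  assert (Ex : forall x0, exists d : posreal, a <= x0 <= b ->
     forall y s, in_cyl a b T y s -> Rabs (y - x0) < d -> Rabs (s - t) < d ->
      Rabs (f y s - f x0 t) < e / 2).
  { intros x0. destruct (classic (a <= x0 <= b)) as [Hx|Hx].
    - destruct (Hc x0 t (conj Hx (conj Ht HT)) (e/2) He2) as [d [Hd H]].
      exists (mkposreal d Hd). intros _; exact H.
    - exists (mkposreal 1 Rlt_0_1). intros; tauto. }
  set (delta := fun x0 => proj1_sig (constructive_indefinite_description _ (Ex x0))).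
  assert (Hdel : forall x0, a <= x0 <= b -> forall y s, in_cyl a b T y s ->
     Rabs (y - x0) < delta x0 -> Rabs (s - t) < delta x0 -> Rabs (f y s - f x0 t) < e / 2).
  { intros x0. unfold delta. destruct (constructive_indefinite_description _ (Ex x0)) as [d Hd].
    simpl. exact Hd. }
  destruct (compactness_value_1d a b delta) as [d Hd].
  exists d. split. apply cond_pos.
  intros x s Hx Hs HsT Hst.
  apply Rnot_le_lt. intros Hcon. apply (Hd x Hx). intros [x0 [Hx0 [H1 H2]]].
  assert (A1 := Hdel x0 Hx0 x s (conj Hx (conj Hs HsT)) H1 (Rlt_le_trans _ _ _ Hst H2)).
  assert (A2 := Hdel x0 Hx0 x t (conj Hx (conj Ht HT)) H1).
  rewrite Rminus_diag, Rabs_R0 in A2. specialize (A2 (cond_pos _)).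
  assert (Rabs (f x s - f x t) <= Rabs (f x s - f x0 t) + Rabs (f x t - f x0 t)).
  { replace (f x s - f x t) with ((f x s - f x0 t) + - (f x t - f x0 t)) by ring.
    eapply Rle_trans. apply Rabs_triang. rewrite Rabs_Ropp. lra. }
  lra.
Qed.

Lemma near_t T t : 0 < t -> Rbar_lt t T -> exists d, 0 < d /\ forall s, Rabs (s - t) < d -> 0 < s /\ Rbar_lt s T.
Proof.
  intros Ht HT. destruct T as [T| |]; simpl in HT.
  - exists (Rmin (t/2) ((T - t)/2)). split. apply Rmin_glb_lt; lra.
    intros s Hs. assert (H1 := Rmin_l (t/2) ((T-t)/2)). assert (H2 := Rmin_r (t/2) ((T-t)/2)).
    unfold Rabs in Hs; destruct Rcase_abs in Hs; simpl; lra.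
  - exists (t/2). split. lra. intros s Hs. unfold Rabs in Hs; destruct Rcase_abs in Hs; simpl; split; auto; lra.
  - contradiction.
Qed.

Ltac relc_tac :=
  repeat match goal with
  | |- relc _ _ (fun x => _ * _) => apply relc_mult
  | |- relc _ _ (fun x => _ + _) => apply relc_plus
  | |- relc _ _ (fun x => _ - _) => apply relc_minus
  | |- relc _ _ (fun x => - _) => apply relc_opp
  | |- relc _ _ (fun x => _ ^ _) => apply relc_pow
  | |- relc _ _ (fun _ => ?c) => apply relc_const
  end.

Lemma Rabs_bound_int a b f B : a <= b -> ex_RInt f a b ->
  (forall x, a < x < b -> Rabs (f x) <= B) -> Rabs (RInt f a b) <= B * (b - a).
Proof.
  intros Hab Hf HB. apply Rabs_le.
  assert (E1 : RInt (fun _ : R => B) a b = B * (b - a)) by apply RI_const.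
  assert (E2 : RInt (fun _ : R => - B) a b = - B * (b - a)) by apply RI_const.
  split.
  - rewrite Ropp_mult_distr_l, <- E2.
    apply RInt_le; auto. apply ex_RInt_const. intros x Hx. specialize (HB x Hx).
    apply Rabs_le_between in HB. lra.
  - rewrite <- E1. apply RInt_le; auto. apply ex_RInt_const. intros x Hx. specialize (HB x Hx).
    apply Rabs_le_between in HB. lra.
Qed.

Lemma tderiv a b T (w w1 w2 wt : R -> R -> R) t :
  a < b -> 0 < t -> Rbar_lt t T ->
  (forall x s, in_open_cyl a b T x s -> is_derive (fun y => w y s) x (w1 x s) /\
     is_derive (fun y => w1 y s) x (w2 x s) /\ is_derive (fun r => w x r) s (wt x s)) ->
  cont_cyl a b T w -> cont_cyl a b T w1 -> cont_cyl a b T w2 -> cont_cyl a b T wt ->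
  (forall s, 0 < s -> Rbar_lt s T -> w1 a s = 0 /\ w1 b s = 0) ->
  is_derive (fun s => RInt (fun x => w1 x s ^ 2) a b) t (-2 * RInt (fun x => wt x t * w2 x t) a b).
Proof.
  intros Hab Ht HT Hd Cw Cw1 Cw2 Cwt Hbc.
  assert (Hdx : forall x s, a < x < b -> 0 < s -> Rbar_lt s T -> is_derive (fun y => w y s) x (w1 x s)).
  { intros x s Hx Hs HsT. exact (proj1 (Hd x s (conj Hx (conj Hs HsT)))). }
  assert (Hdx1 : forall x s, a < x < b -> 0 < s -> Rbar_lt s T -> is_derive (fun y => w1 y s) x (w2 x s)).
  { intros x s Hx Hs HsT. exact (proj1 (proj2 (Hd x s (conj Hx (conj Hs HsT))))). }
  assert (Hdt : forall x s, a < x < b -> 0 < s -> Rbar_lt s T -> is_derive (fun r => w x r) s (wt x s)).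
  { intros x s Hx Hs HsT. exact (proj2 (proj2 (Hd x s (conj Hx (conj Hs HsT))))). }
  clear Hd.
  assert (Key : forall s, 0 < s -> Rbar_lt s T ->
    RInt (fun x => w1 x s ^ 2) a b - RInt (fun x => w1 x t ^ 2) a b =
    - RInt (fun x => (w x s - w x t) * (w2 x s + w2 x t)) a b).
  { intros s Hs HsT.
    assert (Z : RInt (fun x => (w1 x s - w1 x t) * (w1 x s + w1 x t) + (w x s - w x t) * (w2 x s + w2 x t)) a b = 0).
    { apply ftc0 with (fun x => (w x s - w x t) * (w1 x s + w1 x t)); auto.
      - relc_tac; apply (cyl_relc a b T); auto.
      - relc_tac; apply (cyl_relc a b T); auto.
      - intros x Hx. eapply D_eq. apply D_mult. apply D_minus; [apply Hdx|apply Hdx]; auto.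
        apply D_plus; [apply Hdx1|apply Hdx1]; auto. rring.
      - destruct (Hbc s Hs HsT), (Hbc t Ht HT). rewrite H, H1. ring.
      - destruct (Hbc s Hs HsT), (Hbc t Ht HT). rewrite H0, H2. ring. }
    rewrite RI_add in Z.
    rewrite (RInt_ext (fun x => (w1 x s - w1 x t) * (w1 x s + w1 x t)) (fun x => w1 x s ^ 2 - w1 x t ^ 2)) in Z.
    rewrite RI_sub in Z. lra.
    all: try (intros; rring).
    all: apply relc_ex_RInt; [apply Rlt_le, Hab| relc_tac; apply (cyl_relc a b T); auto]. }
  apply is_derive_Reals. intros e He.
  destruct (relc_bound a b (fun x => w2 x t)) as [M2 HM2]. lra. apply (cyl_relc a b T); auto.
  destruct (relc_bound a b (fun x => wt x t)) as [Mt HMt]. lra. apply (cyl_relc a b T); auto.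
  assert (M2p : 0 <= M2). { eapply Rle_trans. apply Rabs_pos. apply (HM2 a). lra. }
  assert (Mtp : 0 <= Mt). { eapply Rle_trans. apply Rabs_pos. apply (HMt a). lra. }
  set (K := M2 + Mt + 1).
  assert (Kp : 0 < K) by (unfold K; lra).
  set (eta := Rmin 1 (e / (4 * K * (b - a)))).
  assert (etap : 0 < eta). { apply Rmin_glb_lt. lra. apply Rdiv_lt_0_compat; auto.
    apply Rmult_lt_0_compat; lra. }
  assert (eta1 : eta <= 1) by apply Rmin_l.
  assert (eta2 : eta <= e / (4 * K * (b - a))) by apply Rmin_r.
  destruct (uc_t a b T w2 t Hab Ht HT Cw2 eta etap) as [d1 [Hd1 U2]].
  destruct (uc_t a b T wt t Hab Ht HT Cwt eta etap) as [d2 [Hd2 Ut]].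
  destruct (near_t T t Ht HT) as [d3 [Hd3 N3]].
  assert (dp : 0 < Rmin d1 (Rmin d2 d3)) by (repeat apply Rmin_glb_lt; auto).
  exists (mkposreal _ dp). intros h Hh0 Hh. simpl in Hh.
  assert (Hh1 : Rabs h < d1) by (eapply Rlt_le_trans; [apply Hh| apply Rmin_l]).
  assert (Hh2 : Rabs h < d2) by (eapply Rlt_le_trans; [apply Hh| eapply Rle_trans; [apply Rmin_r|apply Rmin_l]]).
  assert (Hh3 : Rabs h < d3) by (eapply Rlt_le_trans; [apply Hh| eapply Rle_trans; [apply Rmin_r|apply Rmin_r]]).
  set (s := t + h).
  assert (Hst : s - t = h) by (unfold s; ring).
  destruct (N3 s) as [Hs HsT]. rewrite Hst; auto.
  rewrite Key by auto.
  set (Delta := fun x => (w x s - w x t) / h * (w2 x s + w2 x t) - 2 * (wt x t * w2 x t)).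
  assert (Exs : forall f r, cont_cyl a b T f -> 0 < r -> Rbar_lt r T -> relc a b (fun x => f x r)).
  { intros. apply (cyl_relc a b T); auto. }
  assert (EI : RInt Delta a b = / h * RInt (fun x => (w x s - w x t) * (w2 x s + w2 x t)) a b
                - 2 * RInt (fun x => wt x t * w2 x t) a b).
  { rewrite <- RI_mulc, <- (RI_mulc a b 2), <- RI_sub.
    - apply RInt_ext. intros x _. unfold Delta. rfield. auto.
    all: apply relc_ex_RInt; [apply Rlt_le, Hab| relc_tac; apply Exs; auto]. }
  assert (BD : Rabs (RInt Delta a b) <= (2 * K * eta) * (b - a)).
  { apply Rabs_bound_int. lra. apply relc_ex_RInt. lra. unfold Delta.
    relc_tac; try apply Exs; auto.
    apply relc_ext with (fun x => / h * (w x s - w x t)). lra. intros; unfold Rdiv; ring.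
    relc_tac; apply Exs; auto.
    intros x Hx.
    destruct (MVT_gen (fun r => w x r) t s (wt x)) as [c [Hc Hcv]].
    - intros r Hr. assert (Hr3 : Rabs (r - t) < d3).
      { eapply Rle_lt_trans; [|apply Hh3]. rewrite <- Hst. unfold Rmin, Rmax in Hr.
        destruct Rle_dec in Hr; unfold Rabs; repeat destruct Rcase_abs; lra. }
      destruct (N3 r Hr3). apply Hdt; auto.
    - intros r Hr. assert (Rabs (r - t) < d3).
      { eapply Rle_lt_trans; [|apply Hh3]. rewrite <- Hst. unfold Rmin, Rmax in Hr.
        destruct Rle_dec in Hr; unfold Rabs; repeat destruct Rcase_abs; lra. }
      destruct (N3 r H) as [Hr1 Hr2]. apply continuity_pt_filterlim. apply (ex_derive_continuous (K := R_AbsRing) (V := R_NormedModule) (fun r => w x r)).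
      eexists. apply Hdt; auto.
    - assert (Hct : Rabs (c - t) <= Rabs h).
      { rewrite <- Hst. unfold Rmin, Rmax in Hc.
        destruct Rle_dec in Hc; unfold Rabs; repeat destruct Rcase_abs; lra. }
      destruct (N3 c) as [Hc0 HcT]. lra.
      assert (Q1 : Rabs (wt x c - wt x t) < eta). apply Ut; auto; lra.
      assert (Q2 : Rabs (w2 x s - w2 x t) < eta). apply U2; auto; try lra. rewrite Hst; auto.
      assert (Q3 := HM2 x (conj (Rlt_le _ _ (proj1 Hx)) (Rlt_le _ _ (proj2 Hx)))).
      assert (Q4 := HMt x (conj (Rlt_le _ _ (proj1 Hx)) (Rlt_le _ _ (proj2 Hx)))).
      unfold Delta. rewrite Hcv, Hst.
      replace (wt x c * h / h * (w2 x s + w2 x t) - 2 * (wt x t * w2 x t)) with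
        ((wt x c - wt x t) * ((w2 x s - w2 x t) + 2 * w2 x t) + wt x t * (w2 x s - w2 x t)) by (field; auto).
      set (A := wt x c - wt x t) in *. set (Bv := w2 x s - w2 x t) in *.
      set (C := w2 x t) in *. set (Dv := wt x t) in *.
      eapply Rle_trans. apply Rabs_triang. rewrite !Rabs_mult.
      assert (Rabs (Bv + 2 * C) <= eta + 2 * M2).
      { eapply Rle_trans. apply Rabs_triang. rewrite Rabs_mult, (Rabs_right 2) by lra. lra. }
      assert (Rabs A * Rabs (Bv + 2 * C) <= eta * (eta + 2 * M2)).
      { apply Rmult_le_compat; try apply Rabs_pos; lra. }
      assert (Rabs Dv * Rabs Bv <= Mt * eta).
      { apply Rmult_le_compat; try apply Rabs_pos; lra. }
      assert (eta * (eta + 2 * M2) <= eta * (1 + 2 * M2)).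
      { apply Rmult_le_compat_l; lra. }
      assert (eta * (1 + 2 * M2) + Mt * eta <= 2 * K * eta).
      { unfold K. assert (0 <= eta * (1 + Mt)) by (apply Rmult_le_pos; lra). lra. }
      lra. }
  replace ((- RInt (fun x => (w x s - w x t) * (w2 x s + w2 x t)) a b) / h -
      -2 * RInt (fun x => wt x t * w2 x t) a b) with (- RInt Delta a b) by (rewrite EI; field; auto).
  rewrite Rabs_Ropp. eapply Rle_lt_trans. apply BD.
  assert (2 * K * eta * (b - a) <= 2 * K * (e / (4 * K * (b - a))) * (b - a)).
  { apply Rmult_le_compat_r. lra. apply Rmult_le_compat_l; lra. }
  replace (2 * K * (e / (4 * K * (b - a))) * (b - a)) with (e / 2) in H by (field; lra).
  lra.
Qed.

Lemma Rpower_pos' w p : 0 < Rpower w p.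
Proof. unfold Rpower. apply exp_pos. Qed.

Definition mobd (eps n w : R) : R :=
  (4 * w ^ 3 * (Rpower w (4 - n) + eps) - w ^ 4 * ((4 - n) * Rpower w (4 - n) / w))
  / (Rpower w (4 - n) + eps) ^ 2.
Definition taxd (eps n w : R) : R :=
  ((5 - n) * Rpower w (5 - n) / w * (Rpower w (4 - n) + eps)
   - Rpower w (5 - n) * ((4 - n) * Rpower w (4 - n) / w))
  / (Rpower w (4 - n) + eps) ^ 2.
Definition pw (al w : R) : R := Rpower w (- al).
Definition pwd (al w : R) : R := - al * Rpower w (- al) / w.
Definition qf (al w : R) : R := Rpower w (- al) / w.
Definition qd (al w : R) : R := - (al + 1) * Rpower w (- al) / w ^ 2.
Definition gf (eps w : R) : R := 3 * w ^ 3 / (3 * w ^ 2 + eps).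
Definition gd (eps w : R) : R := (9 * w ^ 4 + 9 * eps * w ^ 2) / (3 * w ^ 2 + eps) ^ 2.
Definition kf (eps lam w : R) : R := 3 * w ^ 3 / (3 * w ^ 2 + eps) * (w - lam).
Definition kd (eps lam w : R) : R := gd eps w * (w - lam) + gf eps w.

Ltac pos_facts w :=
  try (assert (0 < w ^ 2) by (apply pow_lt; lra));
  unfold Rpower in *;
  repeat match goal with
  | |- context [exp ?e] =>
      match goal with
      | H : 0 < exp e |- _ => fail 1
      | _ => assert (0 < exp e) by apply exp_pos
      end
  end.

Ltac side w := pos_facts w; repeat split; try lra; try (intro; lra); try (apply Rgt_not_eq; unfold Rgt; repeat apply Rmult_lt_0_compat; lra).

Ltac der_tac w :=
  pos_facts w; auto_derive; [side w | rfield; side w].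

Lemma mob_der eps n w : 0 < eps -> 0 < w -> is_derive (mob eps n) w (mobd eps n w).
Proof. intros He Hw. unfold mob, mobd. der_tac w. Qed.
Lemma tax_der eps n w : 0 < eps -> 0 < w -> is_derive (tax eps n) w (taxd eps n w).
Proof. intros He Hw. unfold tax, taxd. der_tac w. Qed.
Lemma pw_der al w : 0 < w -> is_derive (pw al) w (pwd al w).
Proof. intros Hw. unfold pw, pwd. der_tac w. Qed.
Lemma qf_der al w : 0 < w -> is_derive (qf al) w (qd al w).
Proof. intros Hw. unfold qf, qd. der_tac w. Qed.
Lemma gf_der eps w : 0 < eps -> 0 < w -> is_derive (gf eps) w (gd eps w).
Proof. intros He Hw. unfold gf, gd. der_tac w. Qed.
Lemma kf_der eps lam w : 0 < eps -> 0 < w -> is_derive (kf eps lam) w (kd eps lam w).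
Proof. intros He Hw. unfold kf, kd, gd, gf. der_tac w. Qed.

Lemma mobd_cont eps n w : 0 < eps -> 0 < w -> continuous (mobd eps n) w.
Proof. intros He Hw. apply exd_cont. unfold mobd. pos_facts w. auto_derive. side w. Qed.
Lemma taxd_cont eps n w : 0 < eps -> 0 < w -> continuous (taxd eps n) w.
Proof. intros He Hw. apply exd_cont. unfold taxd. pos_facts w. auto_derive. side w. Qed.
Lemma pwd_cont al w : 0 < w -> continuous (pwd al) w.
Proof. intros Hw. apply exd_cont. unfold pwd. pos_facts w. auto_derive. side w. Qed.
Lemma qd_cont al w : 0 < w -> continuous (qd al) w.
Proof. intros Hw. apply exd_cont. unfold qd. pos_facts w. auto_derive. side w. Qed.
Lemma kd_cont eps lam w : 0 < eps -> 0 < w -> continuous (kd eps lam) w.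
Proof. intros He Hw. apply exd_cont. unfold kd, gd, gf. pos_facts w. auto_derive. side w. Qed.
Lemma gf_cont eps w : 0 < eps -> 0 < w -> continuous (gf eps) w.
Proof. intros He Hw. apply exd_cont. eexists; apply gf_der; auto. Qed.
Lemma mob_cont eps n w : 0 < eps -> 0 < w -> continuous (mob eps n) w.
Proof. intros He Hw. apply exd_cont. eexists; apply mob_der; auto. Qed.
Lemma tax_cont eps n w : 0 < eps -> 0 < w -> continuous (tax eps n) w.
Proof. intros He Hw. apply exd_cont. eexists; apply tax_der; auto. Qed.
Lemma pw_cont al w : 0 < w -> continuous (pw al) w.
Proof. intros Hw. apply exd_cont. eexists; apply pw_der; auto. Qed.
Lemma qf_cont al w : 0 < w -> continuous (qf al) w.
Proof. intros Hw. apply exd_cont. eexists; apply qf_der; auto. Qed.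
Lemma kf_cont eps lam w : 0 < eps -> 0 < w -> continuous (kf eps lam) w.
Proof. intros He Hw. apply exd_cont. eexists; apply kf_der; auto. Qed.

Lemma isR_lin a b (f g : R -> R) If Ig c : is_RInt f a b If -> is_RInt g a b Ig ->
  is_RInt (fun x => f x + c * g x) a b (If + c * Ig).
Proof.
  intros Hf Hg. apply (is_RInt_plus (V := R_NormedModule) f (fun x => c * g x)); auto.
  apply (is_RInt_scal (V := R_NormedModule) g a b c Ig); auto.
Qed.

Lemma isR_of a b f : a <= b -> relc a b f -> is_RInt f a b (RInt f a b).
Proof. intros. apply (RInt_correct (V := R_CompleteNormedModule)). apply relc_ex_RInt; auto. Qed.

Lemma pq_nonneg al W W1 W2 : 0 < al <= 1/2 -> 0 < W ->
  0 <= (pwd al W * W1 * W1 + pw al W * W2) * W2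
       + (- (2 - al) / 9) * (qd al W * W1 ^ 4 + 3 * qf al W * W1 ^ 2 * W2).
Proof.
  intros Hal HW. unfold pwd, pw, qd, qf.
  assert (HP := Rpower_pos' W (- al)). set (P := Rpower W (- al)) in *.
  set (X := W1 ^ 2 / W).
  replace ((- al * P / W * W1 * W1 + P * W2) * W2 +
    - (2 - al) / 9 * (- (al + 1) * P / W ^ 2 * W1 ^ 4 + 3 * (P / W) * W1 ^ 2 * W2))
   with (P * ((W2 - (1 + al) / 3 * X) ^ 2 + X ^ 2 * ((1 + al) * (1 - 2 * al) / 9)))
   by (unfold X; field; lra).
  apply Rmult_le_pos. lra. apply Rplus_le_le_0_compat. apply pow2_ge_0.
  apply Rmult_le_pos. apply pow2_ge_0. apply Rmult_le_pos; [|lra]. nra.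
Qed.

Lemma kd_bound eps lam W : 0 < eps -> 0 < lam -> 0 < W -> 0 <= 3 * lam + kd eps lam W.
Proof.
  intros He Hl HW. unfold kd, gd, gf.
  assert (0 < W ^ 2) by (apply pow_lt; lra).
  assert (Hd : 0 < 3 * W ^ 2 + eps) by lra.
  replace (3 * lam + ((9 * W ^ 4 + 9 * eps * W ^ 2) / (3 * W ^ 2 + eps) ^ 2 * (W - lam) + 3 * W ^ 3 / (3 * W ^ 2 + eps)))
   with (lam * ((18 * W ^ 4 + 9 * eps * W ^ 2 + 3 * eps ^ 2) / (3 * W ^ 2 + eps) ^ 2)
         + (9 * W ^ 4 + 9 * eps * W ^ 2) / (3 * W ^ 2 + eps) ^ 2 * W + 3 * W ^ 3 / (3 * W ^ 2 + eps))
   by (field; lra).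
  assert (0 < (3 * W ^ 2 + eps) ^ 2) by (apply pow_lt; lra).
  assert (0 < W ^ 3) by (apply pow_lt; lra).
  assert (0 < W ^ 4) by (apply pow_lt; lra).
  repeat apply Rplus_le_le_0_compat; repeat apply Rmult_le_pos; try apply Rlt_le;
    try apply Rdiv_lt_0_compat; try lra; try nra; try (apply Rinv_0_lt_compat; lra).
Qed.

Lemma young_bound eps D beta W Z Y : 0 < eps -> 0 < D -> 0 < W ->
  0 <= D / 2 * Y ^ 2 + gf eps W * beta * Z * Y + beta ^ 2 / (2 * D) * (W ^ 2 * Z ^ 2).
Proof.
  intros He HD HW. unfold gf.
  assert (0 < W ^ 2) by (apply pow_lt; lra).
  assert (Hd : 0 < 3 * W ^ 2 + eps) by lra.
  set (g := 3 * W ^ 3 / (3 * W ^ 2 + eps)).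
  assert (0 <= g) by (unfold g; apply Rlt_le, Rdiv_lt_0_compat; [apply Rmult_lt_0_compat; [lra| apply pow_lt; lra]|lra]).
  assert (g <= W).
  { unfold g. apply Rle_div_l. lra. assert (0 < W ^ 3) by (apply pow_lt; lra). nra. }
  replace (D / 2 * Y ^ 2 + g * beta * Z * Y + beta ^ 2 / (2 * D) * (W ^ 2 * Z ^ 2))
    with ((D * Y + g * beta * Z) ^ 2 / (2 * D) + (beta * Z) ^ 2 * (W ^ 2 - g ^ 2) / (2 * D))
    by (field; lra).
  apply Rplus_le_le_0_compat; apply Rmult_le_pos; try (apply Rlt_le, Rinv_0_lt_compat; lra).
  apply pow2_ge_0. apply Rmult_le_pos. apply pow2_ge_0. nra.
Qed.


Ltac leafc R RC :=
  match goal with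
  | |- relc _ _ (fun x => mob _ _ _) => apply (RC (mob _ _)); intros; apply mob_cont; auto
  | |- relc _ _ (fun x => mobd _ _ _) => apply (RC (mobd _ _)); intros; apply mobd_cont; auto
  | |- relc _ _ (fun x => tax _ _ _) => apply (RC (tax _ _)); intros; apply tax_cont; auto
  | |- relc _ _ (fun x => taxd _ _ _) => apply (RC (taxd _ _)); intros; apply taxd_cont; auto
  | |- relc _ _ (fun x => pw _ _) => apply (RC (pw _)); intros; apply pw_cont; auto
  | |- relc _ _ (fun x => pwd _ _) => apply (RC (pwd _)); intros; apply pwd_cont; auto
  | |- relc _ _ (fun x => qf _ _) => apply (RC (qf _)); intros; apply qf_cont; auto
  | |- relc _ _ (fun x => qd _ _) => apply (RC (qd _)); intros; apply qd_cont; auto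
  | |- relc _ _ (fun x => kf _ _ _) => apply (RC (kf _ _)); intros; apply kf_cont; auto
  | |- relc _ _ (fun x => kd _ _ _) => apply (RC (kd _ _)); intros; apply kd_cont; auto
  | |- relc _ _ (fun x => ?f x ?s) => apply (R f); assumption
  end.

Ltac rtac R RC := relc_tac; try (leafc R RC).
Lemma comp_main a b T D lam sig beta al eps n
  (w w1 w2 w3 w4 wt z z1 z2 z3 z4 zt : R -> R -> R) t :
  a < b -> 0 < D -> 0 < lam -> 0 < al <= 1 / 2 -> 0 < eps ->
  C41 a b T w w1 w2 w3 w4 wt -> C41 a b T z z1 z2 z3 z4 zt ->
  (forall x s, in_cyl a b T x s -> 0 < w x s) ->
  (forall s, 0 < s -> Rbar_lt s T -> w1 a s = 0 /\ w1 b s = 0 /\ w3 a s = 0 /\ w3 b s = 0) ->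
  (forall x s, in_open_cyl a b T x s ->
     wt x s =
       - eps * Derive (fun y => mob eps n (w y s) * w3 y s) x
       + Rpower eps (al / 2) * Derive (fun y => Rpower (w y s) (- al) * w1 y s) x
       + D * w2 x s
       + sig * Derive (fun y => tax eps n (w y s) * z1 y s) x
       + 3 * (w x s) ^ 3 / (3 * (w x s) ^ 2 + eps) * (lam - w x s + beta * z x s)) ->
  0 < t -> Rbar_lt t T ->
  ex_derive (fun s => RInt (fun x => (w1 x s) ^ 2) a b) t /\
  1 / 2 * Derive (fun s => RInt (fun x => (w1 x s) ^ 2) a b) t
  + eps * RInt (fun x => mob eps n (w x t) * (w3 x t) ^ 2) a b
  + D / 2 * RInt (fun x => (w2 x t) ^ 2) a b
  <= - sig * RInt (fun x => Derive (fun y => tax eps n (w y t) * z1 y t) x * w2 x t) a b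
     + 3 * lam * RInt (fun x => (w1 x t) ^ 2) a b
     + beta ^ 2 / (2 * D) * RInt (fun x => (w x t) ^ 2 * (z x t) ^ 2) a b.
Proof.
  intros Hab HD Hlam Hal He Cw Cz Wp Hbc PDE Ht HT.
  destruct Cw as [Hdw [Cw0 [Cw1 [Cw2 [Cw3 [Cw4 Cwt]]]]]].
  destruct Cz as [Hdz [Cz0 [Cz1 [Cz2 _]]]].
  assert (Hab' : a <= b) by lra.
  assert (R : forall f, cont_cyl a b T f -> relc a b (fun x => f x t)).
  { intros. apply (cyl_relc a b T); auto. }
  assert (WP : forall x, a <= x <= b -> 0 < w x t).
  { intros x Hx. apply Wp. split; [|split]; auto. }
  assert (RC : forall phi, (forall v, 0 < v -> continuous phi v) -> relc a b (fun x => phi (w x t))).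
  { intros phi Hphi. apply (relc_comp a b phi (fun x => w x t)); auto. }
  assert (OC : forall x, a < x < b -> in_open_cyl a b T x t) by (intros; split; auto).
  assert (dW : forall x, a < x < b -> is_derive (fun y => w y t) x (w1 x t))
    by (intros x Hx; exact (proj1 (Hdw x t (OC x Hx)))).
  assert (dW1 : forall x, a < x < b -> is_derive (fun y => w1 y t) x (w2 x t))
    by (intros x Hx; exact (proj1 (proj2 (Hdw x t (OC x Hx))))).
  assert (dW2 : forall x, a < x < b -> is_derive (fun y => w2 y t) x (w3 x t))
    by (intros x Hx; exact (proj1 (proj2 (proj2 (Hdw x t (OC x Hx)))))).
  assert (dW3 : forall x, a < x < b -> is_derive (fun y => w3 y t) x (w4 x t))
    by (intros x Hx; exact (proj1 (proj2 (proj2 (proj2 (Hdw x t (OC x Hx))))))).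
  assert (dZ1 : forall x, a < x < b -> is_derive (fun y => z1 y t) x (z2 x t))
    by (intros x Hx; exact (proj1 (proj2 (Hdz x t (OC x Hx))))).
  assert (WPo : forall x, a < x < b -> 0 < w x t) by (intros; apply WP; lra).
  assert (DMe : forall x, a < x < b -> Derive (fun y => mob eps n (w y t) * w3 y t) x
      = mobd eps n (w x t) * w1 x t * w3 x t + mob eps n (w x t) * w4 x t).
  { intros x Hx. apply is_derive_unique. eapply D_eq. apply D_mult.
    apply (D_comp (mob eps n) (fun y => w y t)). apply mob_der; auto. apply dW; auto.
    apply dW3; auto. rring. }
  assert (DPe : forall x, a < x < b -> Derive (fun y => Rpower (w y t) (- al) * w1 y t) x
      = pwd al (w x t) * w1 x t * w1 x t + pw al (w x t) * w2 x t).
  { intros x Hx. apply is_derive_unique. eapply D_eq. apply D_mult.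
    apply (D_comp (pw al) (fun y => w y t)). apply pw_der; auto. apply dW; auto.
    apply dW1; auto. unfold pw; rring. }
  assert (DTe : forall x, a < x < b -> Derive (fun y => tax eps n (w y t) * z1 y t) x
      = taxd eps n (w x t) * w1 x t * z1 x t + tax eps n (w x t) * z2 x t).
  { intros x Hx. apply is_derive_unique. eapply D_eq. apply D_mult.
    apply (D_comp (tax eps n) (fun y => w y t)). apply tax_der; auto. apply dW; auto.
    apply dZ1; auto. rring. }
  assert (TD : is_derive (fun s => RInt (fun x => w1 x s ^ 2) a b) t
                 (-2 * RInt (fun x => wt x t * w2 x t) a b)).
  { apply (tderiv a b T w w1 w2 wt t Hab Ht HT); auto.
    - intros x s Hxs. destruct (Hdw x s Hxs) as [H1 [H2 [_ [_ H5]]]]. auto.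
    - intros s Hs HsT. destruct (Hbc s Hs HsT) as [H1 [H2 _]]. auto. }
  split. { eexists; exact TD. }
  assert (DE : Derive (fun s => RInt (fun x => w1 x s ^ 2) a b) t = -2 * RInt (fun x => wt x t * w2 x t) a b)
    by (apply is_derive_unique; exact TD).
  rewrite DE.
  destruct (Hbc t Ht HT) as [B1a [B1b [B3a B3b]]].
  assert (Z1 : RInt (fun x => (mobd eps n (w x t) * w1 x t * w3 x t + mob eps n (w x t) * w4 x t) * w2 x t
                        + mob eps n (w x t) * w3 x t ^ 2) a b = 0).
  { apply ftc0 with (fun x => mob eps n (w x t) * w3 x t * w2 x t); auto.
    - rtac R RC.
    - rtac R RC.
    - intros x Hx. eapply D_eq. apply D_mult. apply D_mult.
      apply (D_comp (mob eps n) (fun y => w y t)). apply mob_der; auto. apply dW; auto.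
      apply dW3; auto. apply dW2; auto. rring.
    - rewrite B3a; ring.
    - rewrite B3b; ring. }
  assert (Z2 : RInt (fun x => qd al (w x t) * w1 x t ^ 4 + 3 * qf al (w x t) * w1 x t ^ 2 * w2 x t) a b = 0).
  { apply ftc0 with (fun x => qf al (w x t) * (w1 x t * w1 x t * w1 x t)); auto.
    - rtac R RC.
    - rtac R RC.
    - intros x Hx. eapply D_eq. apply D_mult.
      apply (D_comp (qf al) (fun y => w y t)). apply qf_der; auto. apply dW; auto.
      apply D_mult. apply D_mult. apply dW1; auto. apply dW1; auto. apply dW1; auto. rring.
    - rewrite B1a; ring.
    - rewrite B1b; ring. }
  assert (Z3 : RInt (fun x => kd eps lam (w x t) * w1 x t ^ 2 + kf eps lam (w x t) * w2 x t) a b = 0).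
  { apply ftc0 with (fun x => kf eps lam (w x t) * w1 x t); auto.
    - rtac R RC.
    - rtac R RC.
    - intros x Hx. eapply D_eq. apply D_mult.
      apply (D_comp (kf eps lam) (fun y => w y t)). apply kf_der; auto. apply dW; auto.
      apply dW1; auto. rring.
    - rewrite B1a; ring.
    - rewrite B1b; ring. }
  assert (TT : RInt (fun x => Derive (fun y => tax eps n (w y t) * z1 y t) x * w2 x t) a b
             = RInt (fun x => (taxd eps n (w x t) * w1 x t * z1 x t + tax eps n (w x t) * z2 x t) * w2 x t) a b).
  { apply RInt_ext. intros x Hx. rewrite Rmin_left, Rmax_right in Hx by lra. rewrite DTe; auto. }
  rewrite TT.
  set (ep := Rpower eps (al / 2)).
  assert (Hep : 0 < ep) by apply Rpower_pos'.
  set (c := - (2 - al) / 9).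
  assert (I1 := isR_of a b (fun x => wt x t * w2 x t) Hab' ltac:(rtac R RC)).
  assert (I2 := isR_of a b (fun x => mob eps n (w x t) * w3 x t ^ 2) Hab' ltac:(rtac R RC)).
  assert (I3 := isR_of a b (fun x => w2 x t ^ 2) Hab' ltac:(rtac R RC)).
  assert (I4 := isR_of a b (fun x => (taxd eps n (w x t) * w1 x t * z1 x t + tax eps n (w x t) * z2 x t) * w2 x t) Hab' ltac:(rtac R RC)).
  assert (I5 := isR_of a b (fun x => w1 x t ^ 2) Hab' ltac:(rtac R RC)).
  assert (I6 := isR_of a b (fun x => w x t ^ 2 * z x t ^ 2) Hab' ltac:(rtac R RC)).
  assert (I7 := isR_of a b (fun x => (mobd eps n (w x t) * w1 x t * w3 x t + mob eps n (w x t) * w4 x t) * w2 x t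
                        + mob eps n (w x t) * w3 x t ^ 2) Hab' ltac:(rtac R RC)).
  assert (I8 := isR_of a b (fun x => qd al (w x t) * w1 x t ^ 4 + 3 * qf al (w x t) * w1 x t ^ 2 * w2 x t) Hab' ltac:(rtac R RC)).
  assert (I9 := isR_of a b (fun x => kd eps lam (w x t) * w1 x t ^ 2 + kf eps lam (w x t) * w2 x t) Hab' ltac:(rtac R RC)).
  rewrite Z1 in I7. rewrite Z2 in I8. rewrite Z3 in I9.
  assert (Itot := isR_lin _ _ _ _ _ _ 1
    (isR_lin _ _ _ _ _ _ (ep * c)
    (isR_lin _ _ _ _ _ _ eps
    (isR_lin _ _ _ _ _ _ (beta ^ 2 / (2 * D))
    (isR_lin _ _ _ _ _ _ (3 * lam)
    (isR_lin _ _ _ _ _ _ (- sig)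
    (isR_lin _ _ _ _ _ _ (- (D / 2))
    (isR_lin _ _ _ _ _ _ (- eps) I1 I2) I3) I4) I5) I6) I7) I8) I9).
  assert (I0 : is_RInt (fun _ => 0) a b 0).
  { pose proof (is_RInt_const (V := R_NormedModule) a b 0) as H0.
    assert (E : scal (b - a) (0 : R_NormedModule) = 0) by (unfold scal; simpl; unfold mult; simpl; ring).
    rewrite E in H0. exact H0. }
  assert (LE := is_RInt_le _ _ a b _ _ Hab' I0 Itot).
  cut (0 <= RInt (fun x => wt x t * w2 x t) a b + - eps * RInt (fun x => mob eps n (w x t) * w3 x t ^ 2) a b +
     - (D / 2) * RInt (fun x => w2 x t ^ 2) a b +
     - sig * RInt (fun x => (taxd eps n (w x t) * w1 x t * z1 x t + tax eps n (w x t) * z2 x t) * w2 x t) a b +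
     3 * lam * RInt (fun x => w1 x t ^ 2) a b + beta ^ 2 / (2 * D) * RInt (fun x => w x t ^ 2 * z x t ^ 2) a b
     + eps * 0 + ep * c * 0 + 1 * 0).
  { intros. lra. }
  apply LE. intros x Hx. cbv beta.
  assert (Hx' : a < x < b) by lra.
  rewrite (PDE x t (OC x Hx')), (DMe x Hx'), (DPe x Hx'), (DTe x Hx').
  assert (P1 := pq_nonneg al (w x t) (w1 x t) (w2 x t) Hal (WPo x Hx')).
  assert (P2 := young_bound eps D beta (w x t) (z x t) (w2 x t) He HD (WPo x Hx')).
  assert (P3 := kd_bound eps lam (w x t) He Hlam (WPo x Hx')).
  fold c in P1.
  match goal with |- _ <= ?E =>
    replace E with (ep * ((pwd al (w x t) * w1 x t * w1 x t + pw al (w x t) * w2 x t) * w2 x t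
       + c * (qd al (w x t) * w1 x t ^ 4 + 3 * qf al (w x t) * w1 x t ^ 2 * w2 x t))
      + (D / 2 * w2 x t ^ 2 + gf eps (w x t) * beta * z x t * w2 x t + beta ^ 2 / (2 * D) * (w x t ^ 2 * z x t ^ 2))
      + (3 * lam + kd eps lam (w x t)) * w1 x t ^ 2)
  end.
  2: { unfold kf, gf, pw, ep, c. cbv beta. field. assert (0 < w x t ^ 2) by (apply pow_lt; auto). split; apply Rgt_not_eq; lra. }
  apply Rplus_le_le_0_compat. apply Rplus_le_le_0_compat.
  apply Rmult_le_pos; lra. lra. apply Rmult_le_pos. lra. apply pow2_ge_0.
Qed.

Theorem lemma2p5
  (a b : R) (D1 D2 a1 a2 lam1 lam2 chi1 chi2 alpha n1 n2 eps : R) (T : Rbar)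
  (u u1 u2 u3 u4 ut v v1 v2 v3 v4 vt : R -> R -> R) :
  a < b ->
  0 < D1 -> 0 < D2 -> 0 < a1 -> 0 < a2 -> 0 < lam1 -> 0 < lam2 ->
  0 < chi1 -> 0 < chi2 ->
  0 < alpha <= 1 / 2 ->
  0 < n1 < 4 -> 0 < n2 < 4 ->
  0 < eps < 1 ->
  Rbar_lt 0 T ->
  (* classical regularity C^{4,1}(closure(Omega) x (0,T)) *)
  C41 a b T u u1 u2 u3 u4 ut ->
  C41 a b T v v1 v2 v3 v4 vt ->
  (* positivity *)
  (forall x t, in_cyl a b T x t -> 0 < u x t /\ 0 < v x t) ->
  (* boundary conditions u_x = u_xxx = v_x = v_xxx = 0 on the boundary *)
  (forall t, 0 < t -> Rbar_lt t T ->
     u1 a t = 0 /\ u1 b t = 0 /\ u3 a t = 0 /\ u3 b t = 0 /\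
     v1 a t = 0 /\ v1 b t = 0 /\ v3 a t = 0 /\ v3 b t = 0) ->
  (* the approximating PDE system, pointwise in the interior *)
  (forall x t, in_open_cyl a b T x t ->
     ut x t =
       - eps * Derive (fun y => mob eps n1 (u y t) * u3 y t) x
       + Rpower eps (alpha / 2) * Derive (fun y => Rpower (u y t) (- alpha) * u1 y t) x
       + D1 * u2 x t
       - chi1 * Derive (fun y => tax eps n1 (u y t) * v1 y t) x
       + 3 * (u x t) ^ 3 / (3 * (u x t) ^ 2 + eps) * (lam1 - u x t + a1 * v x t)) ->
  (forall x t, in_open_cyl a b T x t ->
     vt x t =
       - eps * Derive (fun y => mob eps n2 (v y t) * v3 y t) x
       + Rpower eps (alpha / 2) * Derive (fun y => Rpower (v y t) (- alpha) * v1 y t) x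
       + D2 * v2 x t
       + chi2 * Derive (fun y => tax eps n2 (v y t) * u1 y t) x
       + 3 * (v x t) ^ 3 / (3 * (v x t) ^ 2 + eps) * (lam2 - v x t - a2 * u x t)) ->
  forall t, 0 < t -> Rbar_lt t T ->
    (ex_derive (fun s => RInt (fun x => (u1 x s) ^ 2) a b) t /\
     1 / 2 * Derive (fun s => RInt (fun x => (u1 x s) ^ 2) a b) t
     + eps * RInt (fun x => mob eps n1 (u x t) * (u3 x t) ^ 2) a b
     + D1 / 2 * RInt (fun x => (u2 x t) ^ 2) a b
     <= chi1 * RInt (fun x => Derive (fun y => tax eps n1 (u y t) * v1 y t) x * u2 x t) a b
        + 3 * lam1 * RInt (fun x => (u1 x t) ^ 2) a b
        + a1 ^ 2 / (2 * D1) * RInt (fun x => (u x t) ^ 2 * (v x t) ^ 2) a b) /\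
    (ex_derive (fun s => RInt (fun x => (v1 x s) ^ 2) a b) t /\
     1 / 2 * Derive (fun s => RInt (fun x => (v1 x s) ^ 2) a b) t
     + eps * RInt (fun x => mob eps n2 (v x t) * (v3 x t) ^ 2) a b
     + D2 / 2 * RInt (fun x => (v2 x t) ^ 2) a b
     <= - chi2 * RInt (fun x => Derive (fun y => tax eps n2 (v y t) * u1 y t) x * v2 x t) a b
        + 3 * lam2 * RInt (fun x => (v1 x t) ^ 2) a b
        + a2 ^ 2 / (2 * D2) * RInt (fun x => (u x t) ^ 2 * (v x t) ^ 2) a b).
Proof.
  intros Hab HD1 HD2 Ha1 Ha2 Hl1 Hl2 Hc1 Hc2 Hal Hn1 Hn2 Heps HT0 Cu Cv Pos BC PDEu PDEv t Ht HT.
  split.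
  - destruct (comp_main a b T D1 lam1 (- chi1) a1 alpha eps n1 u u1 u2 u3 u4 ut v v1 v2 v3 v4 vt t)
      as [H1 H2]; auto; try lra.
    + intros x s Hxs. apply (Pos x s Hxs).
    + intros s Hs HsT. destruct (BC s Hs HsT) as [? [? [? [? _]]]]. auto.
    + intros x s Hxs. rewrite (PDEu x s Hxs). ring.
    + split; auto. lra.
  - destruct (comp_main a b T D2 lam2 chi2 (- a2) alpha eps n2 v v1 v2 v3 v4 vt u u1 u2 u3 u4 ut t)
      as [H1 H2]; auto; try lra.
    + intros x s Hxs. apply (Pos x s Hxs).
    + intros s Hs HsT. destruct (BC s Hs HsT) as [? [? [? [? [? [? [? ?]]]]]]]. auto.
    + intros x s Hxs. rewrite (PDEv x s Hxs). ring.
    + split; auto.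
      rewrite (RInt_ext (fun x => u x t ^ 2 * v x t ^ 2) (fun x => v x t ^ 2 * u x t ^ 2))
        by (intros; rring).
      replace (a2 ^ 2) with ((- a2) ^ 2) by ring. lra.
Qed.
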